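(* Let $k$ be an algebraically closed field of characteristic zero and let $G=(V,E)$ be a finite graph satisfying: (1) $G$ is connected; (2) $G$ is simple; (3) $G$ is strictly subtrivalent; (4) the shortest path between any two distinct vertices of degree $3$ contains at least $3$ edges; (5) $G$ contains no triangle. Let $d=|V|$ and $g=|E|-d+1$. Then the graph curve $C_G$ can be embedded into $\mathbb{P}^{d-g}$ (with homogeneous coordinates $x_0,\ldots,x_{d-g}$) so that the homogeneous ideal of each of its component lines is generated by variables $x_i$ and binomials of the form $x_j - x_k$.
   Context: A graph is strictly subtrivalent if every vertex has degree at most $3$ and at least one vertex has degree less than $3$. The (abstract) graph curve $C_G$ is the union of copies $L_v \cong \mathbb{P}^1$, $v \in V$, where $L_u$ and $L_v$ meet in a node if and only if $uv \in E$ (and are disjoint otherwise); since every vertex has degree at most $3$, on each component the nodes may be taken at $0,1,\infty$, so $C_G$ is determined by $G$. An embedding of $C_G$ into $\mathbb{P}^{d-g}$ means a union of lines $L_v \subset \mathbb{P}^{d-g}$, $v\in V$, with $L_u \cap L_v$ a single point (a node) if $uv\in E$ and empty otherwise. *)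

(* Defs.v *)
From HB Require Import structures.
From mathcomp Require Import all_boot all_order all_algebra.
From mathcomp Require Import mpoly.
Set Implicit Arguments. Unset Strict Implicit. Unset Printing Implicit Defensive.
Import Order.TTheory GRing.Theory.
Local Open Scope ring_scope.

Definition simple_graph (V : finType) (adj : rel V) : Prop :=
  ssrbool.symmetric adj /\ irreflexive adj.

Definition deg (V : finType) (adj : rel V) (v : V) : nat := #|[set u | adj v u]|.

Definition edges (V : finType) (adj : rel V) : {set {set V}} :=
  [set s : {set V} | [exists u, exists v, adj u v && (s == [set u; v])]].

Definition connected_graph (V : finType) (adj : rel V) : Prop :=
  forall u v : V, connect adj u v.

Definition strictly_subtrivalent (V : finType) (adj : rel V) : Prop :=
  (forall v, (deg adj v <= 3)%N) /\ (exists v, (deg adj v < 3)%N).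

(* distinct degree-3 vertices are at distance >= 3: neither adjacent nor with a common neighbour *)
Definition deg3_far_apart (V : finType) (adj : rel V) : Prop :=
  forall u v : V, u != v -> deg adj u = 3%N -> deg adj v = 3%N ->
    ~~ adj u v /\ (forall w, ~~ (adj u w && adj w v)).

Definition triangle_free (V : finType) (adj : rel V) : Prop :=
  forall u v w : V, ~~ [&& adj u v, adj v w & adj w u].

(* the dimension d - g of the target projective space, with d = |V|, g = |E| - d + 1;
   d - g = 2|V| - |E| - 1 (nonnegative under the hypotheses) *)
Definition target_dim (V : finType) (adj : rel V) : nat :=
  (2 * #|V| - #|edges adj| - 1)%N.

(* a subspace of k^(n+1) is represented as the row space of a square matrix;
   a line of P^n is a 2-dimensional subspace *)

(* an embedding of the graph curve C_G as a union of lines L_v in P^n: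
   L_u, L_v meet in exactly one point if uv is an edge, are disjoint otherwise,
   and on each line the nodes coming from distinct neighbours are distinct
   (so the union is a nodal curve whose dual graph is G, i.e. it is C_G). *)
Definition graph_curve_embedding (k : fieldType) (n : nat) (V : finType)
    (adj : rel V) (L : V -> 'M[k]_(n.+1)) : Prop :=
  [/\ forall v, \rank (L v) = 2%N,
      forall u v, u != v -> adj u v -> \rank (L u :&: L v)%MS = 1%N,
      forall u v, u != v -> ~~ adj u v -> \rank (L u :&: L v)%MS = 0%N &
      forall v u w, adj v u -> adj v w -> u != w ->
        ~~ ((L u :&: L v) == (L w :&: L v))%MS ].

(* the (homogeneous) ideal of the linear subvariety P(W) of P^n: polynomials
   vanishing on the cone W ⊆ k^(n+1) *)
Definition vanishing_ideal (k : fieldType) (n : nat) (W : 'M[k]_(n.+1))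
    (p : {mpoly k[n.+1]}) : Prop :=
  forall x : 'rV[k]_(n.+1), (x <= W)%MS -> p.@[fun i => x 0 i] = 0.

Definition ideal_gen (k : fieldType) (m : nat) (S : seq {mpoly k[m]})
    (p : {mpoly k[m]}) : Prop :=
  exists c : 'I_(size S) -> {mpoly k[m]}, p = \sum_(i < size S) c i * S`_i.

Definition var_or_binomial (k : fieldType) (m : nat) (f : {mpoly k[m]}) : Prop :=
  (exists i : 'I_m, f = 'X_i) \/ (exists j l : 'I_m, f = 'X_j - 'X_l).

(* Main.v *)
Require Import Defs.
From HB Require Import structures.
From mathcomp Require Import all_boot all_order all_algebra.
From mathcomp Require Import mpoly.
From mathcomp Require Import ring zify.
Set Implicit Arguments. Unset Strict Implicit. Unset Printing Implicit Defensive.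
Import Order.TTheory GRing.Theory.

Module P_M1.
Local Open Scope ring_scope.

Section Lines.
Variables (k : fieldType) (N : nat).

Definition ind (B : {set 'I_N}) : 'rV[k]_N := \row_j (j \in B)%:R.

Definition line (A B : {set 'I_N}) : 'M[k]_N := <<col_mx (ind A) (ind B)>>%MS.

Lemma indE B j : ind B 0 j = (j \in B)%:R.
Proof. by rewrite mxE. Qed.

Lemma lincE a b A B j : (a *: ind A + b *: ind B) 0 j = a * (j \in A)%:R + b * (j \in B)%:R.
Proof. by rewrite !mxE. Qed.

Lemma sub_lineP A B (x : 'rV[k]_N) :
  reflect (exists a b, x = a *: ind A + b *: ind B) (x <= line A B)%MS.
Proof.
rewrite /line genmxE -addsmxE.
apply: (iffP sub_addsmxP) => [[u ->]|[a [b ->]]].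
  exists (u.1 0 0), (u.2 0 0).
  by rewrite {1}[u.1]mx11_scalar {1}[u.2]mx11_scalar !mul_scalar_mx.
exists (a%:M, b%:M) => /=.
by rewrite !mul_scalar_mx.
Qed.

Lemma line_sym A B (x : 'rV[k]_N) : (x <= line A B)%MS = (x <= line B A)%MS.
Proof.
apply/sub_lineP/sub_lineP => -[a [b ->]]; exists b, a; by rewrite addrC.
Qed.

Lemma ind_neq0 B : B != set0 -> ind B != 0.
Proof.
case/set0Pn => j jB; apply/eqP => /rowP /(_ j).
by rewrite !mxE jB /= => /eqP; rewrite oner_eq0.
Qed.

Lemma ind_inj A B : A != set0 -> (ind A <= ind B)%MS -> A = B.
Proof.
move=> nA /sub_rVP [c Ec]; apply/setP => j.
have : ind A 0 j = (c *: ind B) 0 j by rewrite Ec.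
rewrite !mxE.
case: (set0Pn _ nA) => j0 j0A.
have : ind A 0 j0 = (c *: ind B) 0 j0 by rewrite Ec.
rewrite !mxE j0A.
case: (j0 \in B) => /=; last by rewrite mulr0 => /eqP; rewrite oner_eq0.
rewrite mulr1 => <-; rewrite mul1r.
by case: (j \in A); case: (j \in B) => // /eqP; rewrite ?oner_eq0 // eq_sym oner_eq0.
Qed.

Lemma disj_indP (A B : {set 'I_N}) : A != set0 -> [disjoint A & B] ->
  forall a b, a *: ind A + b *: ind B = 0 -> a = 0.
Proof.
move=> /set0Pn [j jA] dAB a b /rowP /(_ j); rewrite !mxE jA.
rewrite (disjointFr dAB jA).
by rewrite /= mulr1 mulr0 addr0.
Qed.

Lemma cap_rank0 m1 m2 (L1 : 'M[k]_(m1,N)) (L2 : 'M[k]_(m2,N)) :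
  (forall x : 'rV[k]_N, (x <= L1)%MS -> (x <= L2)%MS -> x = 0) ->
  \rank (L1 :&: L2)%MS = 0%N.
Proof.
move=> H; apply/eqP; rewrite mxrank_eq0 -submx0; apply/row_subP => i.
have := row_sub i (L1 :&: L2)%MS; rewrite sub_capmx => /andP [h1 h2].
by rewrite (H _ h1 h2) sub0mx.
Qed.

Lemma rank_line A B : A != set0 -> B != set0 -> [disjoint A & B] ->
  \rank (line A B) = 2%N.
Proof.
move=> nA nB dAB.
rewrite /line genmxE -addsmxE.
have := mxrank_sum_cap (ind A) (ind B).
rewrite !rank_rV !ind_neq0 //.
suff -> : \rank (ind A :&: ind B)%MS = 0%N by rewrite addn0.
apply: cap_rank0 => x /sub_rVP [a Ea] /sub_rVP [b Eb].
have := @disj_indP A B nA dAB a (- b).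
rewrite scaleNr -Ea Eb subrr => /(_ erefl) a0.
by rewrite -Eb Ea a0 scale0r.
Qed.

Lemma cap_eq1 (L1 L2 : 'M[k]_N) (v : 'rV[k]_N) :
  (v <= L1)%MS -> (v <= L2)%MS ->
  (forall x : 'rV[k]_N, (x <= L1)%MS -> (x <= L2)%MS -> (x <= v)%MS) ->
  (L1 :&: L2 == v)%MS.
Proof.
move=> h1 h2 H; apply/andP; split.
  by apply/row_subP => i; have := row_sub i (L1 :&: L2)%MS; rewrite sub_capmx => /andP [] /H; apply.
by rewrite sub_capmx h1 h2.
Qed.

Lemma cap_rank1 (L1 L2 : 'M[k]_N) (D : {set 'I_N}) : D != set0 ->
  (L1 :&: L2 == ind D)%MS -> \rank (L1 :&: L2)%MS = 1%N.
Proof. by move=> nD /eqmx_rank ->; rewrite rank_rV ind_neq0. Qed.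

Lemma cap_neq (L1 L2 L3 : 'M[k]_N) (D1 D2 : {set 'I_N}) : D1 != set0 -> D1 != D2 ->
  (L1 :&: L3 == ind D1)%MS -> (L2 :&: L3 == ind D2)%MS ->
  ~~ ((L1 :&: L3) == (L2 :&: L3))%MS.
Proof.
move=> nD1 nD12 /andP [_ e1] /andP [e2 _]; apply/negP => /andP [e _].
apply/(negP nD12)/eqP/ind_inj => //.
by apply: submx_trans e2; apply: submx_trans e.
Qed.

End Lines.
Arguments ind {k N}.
Arguments line {k N}.

End P_M1.
Import P_M1.

Module P_M1b.
Local Open Scope ring_scope.

Section Caps.
Variables (k : fieldType) (N : nat).
Implicit Types (A B C D : {set 'I_N}) (x : 'rV[k]_N).

Definition inlm A B x := exists a b, x = a *: ind A + b *: ind B.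

Lemma inlC A B x : inlm A B x -> inlm B A x.
Proof. by case=> a [b ->]; exists b, a; rewrite addrC. Qed.

Lemma inl_coord A B C D x : inlm A B x -> inlm C D x ->
  exists a b c d, x = a *: ind A + b *: ind B /\ forall j,
   a * (j \in A)%:R + b * (j \in B)%:R = c * (j \in C)%:R + d * (j \in D)%:R.
Proof.
case=> a [b E1] [c [d E2]]; exists a, b, c, d; split => // j.
by rewrite -!lincE -E1 -E2.
Qed.

Lemma capN A B C D x : [disjoint A :|: B & C :|: D] -> inlm A B x -> inlm C D x -> x = 0.
Proof.
move=> dis h1 h2; have [a [b [c [d [E H]]]]] := inl_coord h1 h2.
apply/rowP => j; rewrite E !mxE.
case: (boolP (j \in A :|: B)) => jAB.
  have := H j; have := disjointFr dis jAB; rewrite inE => /norP [/negbTE -> /negbTE ->].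
  by rewrite !mulr0 addr0.
by move: jAB; rewrite inE => /norP [/negbTE -> /negbTE ->]; rewrite !mulr0 addr0.
Qed.

Lemma capE1 A B C x : A != set0 -> B != set0 -> C != set0 ->
  [disjoint A & B] -> [disjoint A & C] -> [disjoint B & C] ->
  inlm A B x -> inlm A C x -> exists e, x = e *: ind A.
Proof.
move=> nA /set0Pn [jb jB] /set0Pn [jc jC] dAB dAC dBC h1 h2.
have [a [b [c [d [E H]]]]] := inl_coord h1 h2.
have := H jb; rewrite jB (disjointFl dAB jB) (disjointFr dBC jB) !mulr0 mulr1 add0r addr0 => b0.
by exists a; rewrite E b0 scale0r addr0.
Qed.

Lemma capE2 (p q : 'I_N) D x : p != q -> D != set0 -> p \notin D -> q \notin D ->
  inlm [set p] [set q] x -> inlm [set p; q] D x -> exists e, x = e *: ind [set p; q].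
Proof.
move=> pq /set0Pn [j jD] pD qD h1 h2.
have [a [b [c [d [E H]]]]] := inl_coord h1 h2.
have := H j; rewrite jD !inE.
have -> : (j == p) = false by apply/negbTE; apply: contraNneq pD => <-.
have -> : (j == q) = false by apply/negbTE; apply: contraNneq qD => <-.
rewrite /= !mulr0 mulr1 !add0r => /esym d0.
have := H p; have := H q; rewrite !inE !eqxx (negbTE pD) (negbTE qD) d0 mul0r !addr0 orbT !mulr1.
rewrite eq_sym (negbTE pq) /= !mulr0 ?mulr1 ?add0r ?addr0 => bc ac.
exists c; rewrite E bc ac; apply/rowP => i; rewrite !mxE !inE.
have [->|ip] := eqVneq i p; first by rewrite (negbTE pq) /= mulr1 mulr0 addr0.
by case: (i == q); rewrite /= ?mulr0 ?mulr1 ?addr0 ?add0r.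
Qed.

Lemma capD (p q s r : 'I_N) x : p != q -> p != s -> p != r -> s != r -> s != q -> r != q ->
  inlm [set p] [set q] x -> inlm [set p; s] [set r] x -> x = 0.
Proof.
move=> pq ps pr sr sq rq h1 h2.
have [a [b [c [d [E H]]]]] := inl_coord h1 h2.
have Hs := H s; have Hp := H p; have Hq := H q; have Hr := H r.
move: Hs Hp Hq Hr; rewrite !inE !eqxx ?orbT.
rewrite (negbTE ps) (negbTE pq) (negbTE pr) (negbTE sr) (negbTE sq) (negbTE rq).
rewrite ![_ == p]eq_sym (negbTE ps) (negbTE pq) (negbTE pr).
rewrite ![q == _]eq_sym (negbTE sq) (negbTE rq) ![r == s]eq_sym (negbTE sr).
rewrite /= !mulr0 !mulr1 ?addr0 ?add0r.
move=> c0 ac b0 _.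
by rewrite E ac -c0 b0 !scale0r addr0.
Qed.

End Caps.

End P_M1b.
Import P_M1b.

Module P_Mz.
Local Open Scope ring_scope.

Local Notation widen := (widen_ord (leqnSn _)).

Section Zero.
Variable k : fieldType.
Hypothesis hk : [pchar k] =i pred0.

Lemma natr_inj_k : injective (fun i : nat => i%:R : k).
Proof.
move=> i j /= E.
have H := (pcharf0P k).1 hk.
wlog le_ij : i j E / (i <= j)%N.
  by move=> W; case: (leqP i j) => h; [apply: W | apply/esym/W => //; apply: ltnW].
have : ((j - i)%:R : k) == 0 by rewrite natrB // E subrr.
by rewrite H subn_eq0 => h; apply/eqP; rewrite eqn_leq le_ij h.
Qed.

Lemma poly_zero (q : {poly k}) : (forall t, q.[t] = 0) -> q = 0.
Proof.
move=> Hq; apply: (@roots_geq_poly_eq0 _ q [seq i%:R | i <- iota 0 (size q)]).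
- by apply/allP => x _; apply/eqP; apply: Hq.
- by rewrite map_inj_uniq ?iota_uniq //; apply: natr_inj_k.
- by rewrite size_map size_iota.
Qed.

Lemma mpoly_ext n (F G : {mpoly k[n]} -> k) :
  (forall p q, F (p + q) = F p + F q) -> (forall p q, F (p * q) = F p * F q) ->
  (forall c, F c%:MP = c) ->
  (forall p q, G (p + q) = G p + G q) -> (forall p q, G (p * q) = G p * G q) ->
  (forall c, G c%:MP = c) ->
  (forall i, F 'X_i = G 'X_i) -> forall p, F p = G p.
Proof.
move=> FD FM FC GD GM GC FX.
have F0 : F 0 = 0 by rewrite -(mpolyC0 n k) FC.
have G0 : G 0 = 0 by rewrite -(mpolyC0 n k) GC.
have F1 : F 1 = 1 by rewrite -mpolyC1 FC.
have G1 : G 1 = 1 by rewrite -mpolyC1 GC.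
have FP : forall (r : seq 'I_n) (f : 'I_n -> {mpoly k[n]}), F (\prod_(i <- r) f i) = \prod_(i <- r) F (f i).
  by move=> r f; apply: (big_morph F FM F1).
have GP : forall (r : seq 'I_n) (f : 'I_n -> {mpoly k[n]}), G (\prod_(i <- r) f i) = \prod_(i <- r) G (f i).
  by move=> r f; apply: (big_morph G GM G1).
have FXn : forall x e, F (x ^+ e) = F x ^+ e.
  by move=> x; elim => [|e IH]; rewrite ?expr0 ?F1 // !exprS FM IH.
have GXn : forall x e, G (x ^+ e) = G x ^+ e.
  by move=> x; elim => [|e IH]; rewrite ?expr0 ?G1 // !exprS GM IH.
elim/mpolyind => [|c m p _ _ IH]; first by rewrite F0 G0.
rewrite FD GD IH -mul_mpolyC FM GM FC GC mpolyXE_id FP GP; congr (_ * _ + _).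
by apply: eq_bigr => i _; rewrite FXn GXn FX.
Qed.

Lemma mwiden_meval n (q : {mpoly k[n]}) (v : 'I_n.+1 -> k) :
  (mwiden q).@[v] = q.@[fun i => v (widen i)].
Proof.
apply: (@mpoly_ext n (fun q => (mwiden q).@[v]) (fun q => q.@[fun i => v (widen i)])) => /=.
- by move=> p q'; rewrite mwidenD mevalD.
- by move=> p q'; rewrite mwidenM mevalM.
- by move=> c; rewrite mwidenC mevalC.
- by move=> p q'; rewrite mevalD.
- by move=> p q'; rewrite mevalM.
- by move=> c; rewrite mevalC.
- by move=> i; rewrite mwidenX mnmwiden1 !mevalXU.
Qed.

Definition mlast n (m : 'X_{1..n.+1}) : 'X_{1..n} := [multinom m (widen i) | i < n].

Lemma mpolyX_split n (m : 'X_{1..n.+1}) :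
  'X_[m] = mwiden 'X_[mlast m] * 'X_ord_max ^+ (m ord_max) :> {mpoly k[n.+1]}.
Proof.
rewrite mwidenX mpolyXn -mpolyXD; congr 'X_[_]; apply/mnmP => i.
rewrite mnmDE mulmnE mnm1E.
case: (unliftP ord_max i) => [j ->|->].
  have -> : lift ord_max j = widen j by apply: val_inj; rewrite /= /bump leqNgt ltn_ord.
  rewrite mnmwiden_widen mnmE eq_sym.
  rewrite (_ : (widen j == ord_max) = false) ?addn0 //.
  by apply/negbTE; rewrite -val_eqE /= neq_ltn ltn_ord.
by rewrite mnmwiden_ordmax eqxx mul1n.
Qed.

Lemma sum_ext0 (V : zmodType) (F : nat -> V) B0 B : (B0 <= B)%N -> (forall j, (B0 <= j)%N -> F j = 0) ->
  \sum_(j < B) F j = \sum_(j < B0) F j.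
Proof.
move=> le H; rewrite -!(big_mkord xpredT) (big_cat_nat (leq0n B0) le) /=.
rewrite [X in _ + X]big1_seq ?addr0 // => j /andP [_]; rewrite mem_iota subnKC // => /andP [h _].
exact: H.
Qed.

Lemma mpoly_dec n (p : {mpoly k[n.+1]}) : exists B (q : nat -> {mpoly k[n]}),
  (forall j, (B <= j)%N -> q j = 0) /\
  p = \sum_(j < B) mwiden (q j) * 'X_ord_max ^+ j.
Proof.
elim/mpolyind: p => [|c m p _ _ [B [q [Hq ->]]]].
  by exists 0%N, (fun _ => 0); split => //; rewrite big_ord0.
set e := m ord_max.
exists (maxn B e.+1), (fun j => q j + (if j == e then c *: 'X_[mlast m] else 0)); split.
  move=> j; rewrite geq_max => /andP [h1 h2]; rewrite Hq // add0r.
  by case: eqP => // je; move: h2; rewrite je ltnn.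
apply/esym; under eq_bigr do rewrite mwidenD mulrDl.
rewrite big_split /= [RHS]addrC; congr (_ + _).
  rewrite (@sum_ext0 _ (fun j => mwiden (q j) * 'X_ord_max ^+ j) B) ?leq_maxl //.
  by move=> j /Hq ->; rewrite mwiden0 mul0r.
rewrite (bigD1 (Ordinal (leq_trans (leqnn e.+1) (leq_maxr B e.+1)))) //= eqxx.
rewrite big1 ?addr0; first by rewrite mwidenZ -scalerAl -mpolyX_split.
move=> j; rewrite -val_eqE /= => /negbTE ->; by rewrite mwiden0 mul0r.
Qed.

Lemma mpoly_zero n (p : {mpoly k[n]}) : (forall v, p.@[v] = 0) -> p = 0.
Proof.
elim: n p => [|n IH] p Hp.
  have E1 : p = (\sum_(m <- msupp p) p@_m) *: 1.
    rewrite {1}(mpolyE p) scaler_suml; apply: eq_bigr => m _.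
    by rewrite (nvar0_mnmE m) mpolyX0.
  have E2 : p.@[fun _ => 0] = \sum_(m <- msupp p) p@_m.
    by rewrite mevalE; apply: eq_bigr => m _; rewrite big_ord0 mulr1.
  by rewrite E1 -E2 Hp scale0r.
have [B [q [Hq Ep]]] := mpoly_dec p.
suff Q0 : forall j, (j < B)%N -> q j = 0.
  by rewrite Ep big1 // => j _; rewrite Q0 // mwiden0 mul0r.
move=> j jB; apply: IH => w.
pose P := \poly_(i < B) (q i).@[w].
have P0 : P = 0.
  apply: poly_zero => t.
  pose v : 'I_n.+1 -> k := fun i => if insub (val i) is Some i' then w i' else t.
  have vw : forall i : 'I_n, v (widen i) = w i.
    move=> i; rewrite /v; case: insubP => [i' _ /val_inj -> //|]; by rewrite /= ltn_ord.
  have vt : v ord_max = t.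
    by rewrite /v; case: insubP => //= i'; rewrite ltnn.
  transitivity (p.@[v]); last exact: Hp v.
  rewrite Ep raddf_sum /= horner_poly.
  apply: eq_bigr => i _; rewrite mevalM rmorphXn /= mevalXU mwiden_meval vt.
  by congr (_ * _); apply: meval_eq => i'; rewrite vw.
have := congr1 (fun P : {poly k} => P`_j) P0; by rewrite /= coef_poly jB coef0.
Qed.

End Zero.

End P_Mz.
Import P_Mz.

Module P_M2.
Local Open Scope ring_scope.

Section Ideal.
Variable k : fieldType.
Hypothesis hk : [pchar k] =i pred0.
Variable N : nat.
Variable S : seq {mpoly k[N]}.
Local Notation IG := (ideal_gen S).

Lemma IG0 : IG 0.
Proof. by exists (fun _ => 0); rewrite big1 // => i _; rewrite mul0r. Qed.

Lemma IGD p q : IG p -> IG q -> IG (p + q).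
Proof.
case=> c -> [d ->]; exists (fun i => c i + d i).
by rewrite -big_split; apply: eq_bigr => i _; rewrite mulrDl.
Qed.

Lemma IGM q p : IG p -> IG (q * p).
Proof.
case=> c ->; exists (fun i => q * c i).
by rewrite mulr_sumr; apply: eq_bigr => i _; rewrite mulrA.
Qed.

Lemma IGS f : f \in S -> IG f.
Proof.
move=> fS; have iS : (index f S < size S)%N by rewrite index_mem.
exists (fun i => (i == Ordinal iS)%:R).
rewrite (bigD1 (Ordinal iS)) //= eqxx mul1r big1 ?addr0 ?nth_index //.
by move=> i /negbTE ->; rewrite mul0r.
Qed.

Lemma IGsum (I : Type) (r : seq I) (F : I -> {mpoly k[N]}) :
  (forall i, IG (F i)) -> IG (\sum_(i <- r) F i).
Proof. move=> H; elim: r => [|a r IH]; rewrite ?big_nil ?big_cons; [exact: IG0| exact: IGD]. Qed.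

Lemma IG_prod (I : Type) (r : seq I) (a b : I -> {mpoly k[N]}) :
  (forall i, IG (a i - b i)) -> IG (\prod_(i <- r) a i - \prod_(i <- r) b i).
Proof.
move=> H; elim: r => [|x r IH]; first by rewrite !big_nil subrr; exact: IG0.
rewrite !big_cons.
have -> : a x * \prod_(j <- r) a j - b x * \prod_(j <- r) b j =
  a x * (\prod_(j <- r) a j - \prod_(j <- r) b j) + (\prod_(j <- r) b j) * (a x - b x).
  by ring.
by apply: IGD; apply: IGM.
Qed.

Lemma IG_pow a b e : IG (a - b) -> IG (a ^+ e - b ^+ e).
Proof.
move=> H; have := @IG_prod _ (index_iota 0 e) (fun _ => a) (fun _ => b) (fun _ => H).
by rewrite !prodr_const_nat subn0.
Qed.

End Ideal.

Section Line.
Variable k : fieldType.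
Hypothesis hk : [pchar k] =i pred0.
Variable n : nat.
Local Notation N := n.+1.
Variables (A B : {set 'I_N}) (r0 r1 : 'I_N).
Hypotheses (r0A : r0 \in A) (r1B : r1 \in B) (dAB : [disjoint A & B]).

Definition gens : seq {mpoly k[N]} :=
  [seq 'X_i | i <- enum (~: (A :|: B))] ++ [seq 'X_i - 'X_r0 | i <- enum A]
  ++ [seq 'X_i - 'X_r1 | i <- enum B].

Lemma gens_vb f : f \in gens -> var_or_binomial f.
Proof.
rewrite !mem_cat => /or3P [] /mapP [i _ ->].
- by left; exists i.
- by right; exists i, r0.
- by right; exists i, r1.
Qed.

Definition sigm (i : 'I_N) : {mpoly k[N]} :=
  if i \in A then 'X_r0 else if i \in B then 'X_r1 else 0.

Lemma IG_sig i : ideal_gen gens ('X_i - sigm i).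
Proof.
apply: IGS; rewrite /sigm !mem_cat.
case: ifP => iA; first by apply/or3P; apply: Or32; apply/mapP; exists i; rewrite ?mem_enum.
case: ifP => iB; first by apply/or3P; apply: Or33; apply/mapP; exists i; rewrite ?mem_enum.
apply/or3P; apply: Or31; apply/mapP; exists i; rewrite ?subr0 // mem_enum !inE iA iB //=.

Qed.

Definition phi (p : {mpoly k[N]}) := p \mPo [tuple sigm i | i < N].

Lemma IG_phi p : ideal_gen gens (p - phi p).
Proof.
rewrite /phi comp_mpolyEX {1}(mpolyE p) -sumrB.
apply: IGsum => m; rewrite -scalerBr -mul_mpolyC; apply: IGM.
rewrite comp_mpolyX mpolyXE_id; apply: IG_prod => i.
by rewrite tnth_mktuple; apply: IG_pow; apply: IG_sig.
Qed.

Lemma gens_vanish a b f : f \in gens ->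
  f.@[fun j => (a *: ind A + b *: ind B) 0 j] = 0.
Proof.
have nB : forall i, i \in A -> (i \in B) = false by move=> i iA; exact: (disjointFr dAB iA).
rewrite !mem_cat => /or3P [] /mapP [i iS ->].
- rewrite mevalXU lincE; move: iS; rewrite mem_enum !inE => /norP [/negbTE -> /negbTE ->].
  by rewrite !mulr0 addr0.
- move: iS; rewrite mem_enum => iA.
  by rewrite mevalB !mevalXU !lincE iA r0A !nB // subrr.
- move: iS; rewrite mem_enum => iB.
  have nA : forall j, j \in B -> (j \in A) = false by move=> j jB; exact: (disjointFl dAB jB).
  by rewrite mevalB !mevalXU !lincE iB r1B !nA // subrr.
Qed.

Lemma gens_ideal p : vanishing_ideal (line A B) p <-> ideal_gen gens p.
Proof.
split.
- move=> Hv.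
  have P0 : phi p = 0.
    apply: (mpoly_zero hk) => y.
    rewrite /phi comp_mpoly_meval.
    pose x : 'rV[k]_N := y r0 *: ind A + y r1 *: ind B.
    have xL : (x <= line A B)%MS by apply/sub_lineP; exists (y r0), (y r1).
    rewrite -(Hv x xL); apply: meval_eq => i; rewrite tnth_mktuple /sigm /x lincE.
    case: ifP => iA.
      by rewrite (disjointFr dAB iA) mevalXU mulr1 mulr0 addr0.
    by case: ifP => iB; rewrite ?mevalXU ?meval0 mulr0 ?mulr1 ?mulr0 add0r.
  by have := IG_phi p; rewrite P0 subr0.
- case=> c -> x /sub_lineP [a [b ->]].
  rewrite raddf_sum big1 // => i _.
  by rewrite /= mevalM (@gens_vanish a b gens`_i (mem_nth 0 (ltn_ord i))) mulr0.
Qed.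

End Line.

End P_M2.
Import P_M2.

Module P_M3a.

Lemma disjP' (T : finType) (A B : {pred T}) :
  (forall x, x \in A -> x \in B -> False) -> [disjoint A & B].
Proof.
move=> H; rewrite disjoint_subset; apply/subsetP => x xA.
by rewrite inE; apply/negP => xB; exact: H x xA xB.
Qed.

Section Comb.
Variables (V : finType) (adj : rel V).
Hypotheses (Hsym : ssrbool.symmetric adj) (Hirr : irreflexive adj)
  (Hdeg : forall v, (deg adj v <= 3)%N) (Hfar : deg3_far_apart adj)
  (Htri : triangle_free adj).

Definition nb v : seq V := enum [set u | adj v u].
Lemma mem_nb v u : (u \in nb v) = adj v u.
Proof. by rewrite mem_enum inE. Qed.
Lemma size_nb v : size (nb v) = deg adj v.
Proof. by rewrite /deg cardE. Qed.

Definition idx v u := index u (nb v).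

Lemma idx_lt v u : adj v u -> idx v u < deg adj v.
Proof. by rewrite /idx -size_nb index_mem mem_nb. Qed.

Lemma idx_inj v u w : adj v u -> adj v w -> idx v u = idx v w -> u = w.
Proof.
move=> hu hw E.
have e1 : nth u (nb v) (idx v u) = u by apply: nth_index; rewrite mem_nb.
have e2 : nth u (nb v) (idx v w) = w by apply: nth_index; rewrite mem_nb.
by rewrite -e1 -e2 E.
Qed.

Lemma adj_neq u v : adj u v -> u != v.
Proof. by apply: contraTneq => ->; rewrite Hirr. Qed.

Lemma idx2_deg v u : adj v u -> idx v u = 2 -> deg adj v = 3.
Proof. by move=> h E; have := idx_lt h; have := Hdeg v; rewrite E; lia. Qed.

Lemma deg3_nadj v u : deg adj v = 3 -> deg adj u = 3 -> ~~ adj v u.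
Proof.
move=> dv du; case: (eqVneq v u) => [->|vu]; first by rewrite Hirr.
by case: (Hfar vu dv du).
Qed.

Lemma deg3_ncommon x y v : x != y -> deg adj x = 3 -> deg adj y = 3 -> adj x v -> adj v y -> False.
Proof. by move=> xy dx dy h1 h2; case: (Hfar xy dx dy) => _ /(_ v); rewrite h1 h2. Qed.

Lemma idx_nbr3 v u : adj v u -> deg adj v = 3 -> idx u v < 2.
Proof.
move=> h dv; have h' : adj u v by rewrite Hsym.
have := idx_lt h'; have := Hdeg u.
have : deg adj u != 3 by apply/eqP => du; move: (deg3_nadj dv du); rewrite h.
lia.
Qed.

Definition pr (s t : V * bool) : bool :=
  [&& adj s.1 t.1, idx s.1 t.1 == s.2 & idx t.1 s.1 == t.2].

Definition absb (s : V * bool) (u : V) : bool :=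
  [&& adj s.1 u, idx s.1 u == s.2 & idx u s.1 == 2].
Definition abs (s : V * bool) : bool := [exists u, absb s u].

Lemma pr_sym s t : pr s t = pr t s.
Proof. by rewrite /pr Hsym; case: (adj _ _) => //=; rewrite andbC. Qed.

Lemma pr_uniq s t t' : pr s t -> pr s t' -> t = t'.
Proof.
case: t t' => [t b] [t' b'] /and3P [h1 /eqP e1 /eqP e2] /and3P [h1' /eqP e1' /eqP e2'] /=.
have tt : t = t' by apply: (idx_inj h1 h1'); rewrite e1 e1'.
subst t'; have : nat_of_bool b = nat_of_bool b' by rewrite -e2 -e2'.
move=> E; clear -E; by case: b b' E => [] [].
Qed.

Lemma absb_uniq s u u' : absb s u -> absb s u' -> u = u'.
Proof.
case/and3P => h /eqP e _ /and3P [h' /eqP e' _].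
by apply: (idx_inj h h'); rewrite e e'.
Qed.

Lemma absb_deg s u : absb s u -> deg adj u = 3.
Proof. by case/and3P => h _ /eqP e; apply: (idx2_deg _ e); rewrite Hsym. Qed.

Lemma pr_nabs s t : pr s t -> ~~ abs s.
Proof.
move=> p; apply/existsP => -[u ab]; move: p ab.
case/and3P => h /eqP e1 /eqP e2 /and3P [h' /eqP e1' /eqP e2'].
have tu : t.1 = u by apply: (idx_inj h h'); rewrite e1 e1'.
by move: e2; rewrite tu e2'; case: (t.2).
Qed.

Lemma deg3_nabs x b : deg adj x = 3 -> ~~ abs (x, b).
Proof.
move=> dx; apply/existsP => -[u ab]; have du := absb_deg ab.
by case/and3P: ab => /= h _ _; move: (deg3_nadj dx du); rewrite h.
Qed.

Local Notation rk := (@enum_rank (V * bool)%type).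

Definition key (s : V * bool) : 'I_#|{: V * bool}| :=
  if [pick t | pr s t] is Some t then (if (rk t < rk s)%N then rk t else rk s) else rk s.

Lemma key_spec s : exists x, key s = rk x /\ (x = s \/ pr s x).
Proof.
rewrite /key; case: pickP => [t pt|_]; last by exists s; split => //; left.
by case: ifP => _; [exists t; split => //; right | exists s; split => //; left].
Qed.

Lemma key_eq s t : key s = key t <-> s = t \/ pr s t.
Proof.
split.
  have [x [-> hx]] := key_spec s; have [y [-> hy]] := key_spec t.
  move/enum_rank_inj => xy; rewrite -xy in hy.
  case: hx hy => [-> [->|p]|p [<-|p']]; [by left|by right; rewrite pr_sym|by right|].
  by left; apply: (@pr_uniq x); rewrite pr_sym.
case=> [->//|p].
rewrite /key; case: pickP => [t' pt'|/(_ t)]; last by rewrite p.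
case: pickP => [s' ps'|/(_ s)]; last by rewrite pr_sym p.
have <- := pr_uniq p pt'; rewrite pr_sym in p; have <- := pr_uniq p ps'.
case: (ltngtP (rk t) (rk s)) => h.
- by [].
- by [].
- by apply: val_inj; rewrite /= h.
Qed.

Lemma key_pr s t : pr s t -> key s = (if (rk t < rk s)%N then rk t else rk s).
Proof.
move=> p; rewrite /key; case: pickP => [t' pt'|/(_ t)]; last by rewrite p.
by rewrite (pr_uniq pt' p).
Qed.

Lemma pr_irr s : ~~ pr s s.
Proof. by rewrite /pr Hirr. Qed.

Definition Rset := [set key s | s in [pred s | ~~ abs s]].
Definition NR := [set rk s | s in [pred s | abs s || [exists t, pr s t && (rk t < rk s)%N]]].

Lemma RNR_disj : [disjoint Rset & NR].
Proof.
apply: disjP' => i /imsetP [s ns ->] /imsetP [s0 h0 e].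
have [x [kx hx]] := key_spec s; rewrite kx in e; have xs0 := enum_rank_inj e.
subst s0; move: h0; rewrite inE => /orP [ax|/existsP [t /andP [pt lt]]].
  case: hx => [xs|p]; first by move: ns; rewrite inE -xs ax.
  by rewrite pr_sym in p; move: ax; rewrite (negbTE (pr_nabs p)).
case: hx => [xs|p].
  subst x; move: kx; rewrite (key_pr pt) lt => /enum_rank_inj ts.
  by move: pt; rewrite ts (negbTE (pr_irr s)).
rewrite pr_sym in p; have ts := pr_uniq pt p; subst t.
have psx : pr s x by rewrite pr_sym.
move: kx; rewrite (key_pr psx).
case: ifP => h; first by move: h lt; lia.
move/enum_rank_inj => sx; subst x; by move: lt; rewrite ltnn.
Qed.

Lemma b2n i : (i < 2)%N -> nat_of_bool (i == 1%N) = i.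
Proof. by case: i => [|[|]]. Qed.

Lemma set2C (a b : V) : [set a; b] = [set b; a].
Proof. by apply/setP => x; rewrite !inE orbC. Qed.

Definition hedge (i : 'I_#|{: V * bool}|) : {set V} :=
  let s := enum_val i in [set s.1; nth s.1 (nb s.1) s.2].

Lemma hedgeE (a c : V) (b : bool) : adj a c -> idx a c = b -> hedge (rk (a, b)) = [set a; c].
Proof.
move=> h e; rewrite /hedge enum_rankK /= -e /idx nth_index //.
by rewrite mem_nb.
Qed.

Lemma card_edges : (#|edges adj| <= #|NR|)%N.
Proof.
apply: leq_trans (leq_imset_card hedge _); apply: subset_leq_card.
apply/subsetP => e; rewrite inE => /existsP [u /existsP [v /andP [huv /eqP ->]]].
have hvu : adj v u by rewrite Hsym.
have lu := idx_lt huv; have lv := idx_lt hvu; have du := Hdeg u; have dv := Hdeg v.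
case: (eqVneq (idx u v) 2) => [e2|n2].
  have l2 := idx_nbr3 huv (idx2_deg huv e2).
  apply/imsetP; exists (rk (v, idx v u == 1%N)).
    apply/imset_f; rewrite inE; apply/orP; left; apply/existsP; exists u.
    by rewrite /absb /= hvu b2n // eqxx e2 /=.
  by rewrite (hedgeE hvu) ?b2n // set2C.
case: (eqVneq (idx v u) 2) => [e2|n2'].
  have l2 := idx_nbr3 hvu (idx2_deg hvu e2).
  apply/imsetP; exists (rk (u, idx u v == 1%N)).
    apply/imset_f; rewrite inE; apply/orP; left; apply/existsP; exists v.
    by rewrite /absb /= huv b2n // eqxx e2 /=.
  by rewrite (hedgeE huv) ?b2n.
have l1 : (idx u v < 2)%N by move: lu n2; lia.
have l2 : (idx v u < 2)%N by move: lv n2'; lia.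
set s := (u, idx u v == 1%N); set t := (v, idx v u == 1%N).
have pst : pr s t by rewrite /pr /= huv !b2n // !eqxx.
have st : s != t by apply: contraTneq huv => [[->]]; rewrite Hirr.
case: (ltngtP (rk t) (rk s)) => h.
- apply/imsetP; exists (rk s).
    apply/imset_f; rewrite inE; apply/orP; right; apply/existsP; exists t; by rewrite pst h.
  by rewrite (hedgeE huv) ?b2n.
- apply/imsetP; exists (rk t).
    apply/imset_f; rewrite inE; apply/orP; right; apply/existsP; exists s; by rewrite pr_sym pst h.
  by rewrite (hedgeE hvu) ?b2n // set2C.
- by move: st; rewrite (enum_rank_inj (val_inj h)) eqxx.
Qed.

Lemma card_R : (#|Rset| + #|edges adj| <= 2 * #|V|)%N.
Proof.
apply: (@leq_trans (#|Rset| + #|NR|)); first by rewrite leq_add2l card_edges.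
have := cardsU Rset NR; rewrite disjoint_setI0 ?RNR_disj // cards0 subn0 => <-.
apply: leq_trans (max_card _) _; rewrite card_ord card_prod card_bool; lia.
Qed.

End Comb.

End P_M3a.
Import P_M3a.

Module P_M3b.

Section Blocks.
Variables (V : finType) (adj : rel V).
Hypotheses (Hsym : ssrbool.symmetric adj) (Hirr : irreflexive adj)
  (Hdeg : forall v, (deg adj v <= 3)%N) (Hfar : deg3_far_apart adj)
  (Htri : triangle_free adj).
Variable n : nat.
Hypothesis HR : (#|Rset adj| <= n.+1)%N.

Local Notation pr := (pr adj).
Local Notation absb := (absb adj).
Local Notation abs := (abs adj).
Local Notation idx := (idx adj).

Definition fc (s : V * bool) : 'I_n.+1 := inord (index (key adj s) (enum (Rset adj))).

Lemma f_val s : ~~ abs s -> nat_of_ord (fc s) = index (key adj s) (enum (Rset adj)).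
Proof.
move=> ns; rewrite /fc inordK //; apply: leq_trans HR.
by rewrite cardE index_mem mem_enum; apply: imset_f; rewrite inE.
Qed.

Lemma f_eq s t : ~~ abs s -> ~~ abs t -> fc s = fc t -> s = t \/ pr s t.
Proof.
move=> ns nt e; apply: (proj1 (key_eq Hsym s t)).
have := congr1 (@nat_of_ord _) e; rewrite !f_val // => ei.
have ks : key adj s \in enum (Rset adj) by rewrite mem_enum; apply: imset_f; rewrite inE.
have kt : key adj t \in enum (Rset adj) by rewrite mem_enum; apply: imset_f; rewrite inE.
by rewrite -(nth_index (key adj s) ks) ei nth_index.
Qed.

Lemma f_pr s t : pr s t -> fc s = fc t.
Proof. by move=> p; rewrite /fc (proj2 (key_eq Hsym s t)) //; right. Qed.

Definition blk (s : V * bool) : {set 'I_n.+1} :=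
  if [pick u | absb s u] is Some u then [set fc (u, false); fc (u, true)] else [set fc s].

Definition src (s s' : V * bool) : Prop :=
  (~~ abs s /\ s' = s) \/ (exists u, absb s u /\ s'.1 = u).

Lemma blk_src s j : j \in blk s -> exists s', src s s' /\ j = fc s'.
Proof.
rewrite /blk; case: pickP => [u au|nu].
  rewrite !inE => /orP [] /eqP ->; [exists (u, false)|exists (u, true)]; split => //; right; by exists u.
rewrite inE => /eqP ->; exists s; split => //; left; split => //.
by apply/existsP => -[u]; rewrite nu.
Qed.

Lemma src_nabs s s' : src s s' -> ~~ abs s'.
Proof.
case=> [[ns ->]//|[u [au su]]].
case: s' su => x b /= ->; apply: (deg3_nabs Hsym Hirr Hdeg Hfar); exact: (absb_deg Hsym Hdeg au).
Qed.

Lemma blk_n0 s : blk s != set0.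
Proof. by rewrite /blk; case: pickP => [u _|_]; apply/set0Pn; [exists (fc (u, false))|exists (fc s)]; rewrite !inE eqxx. Qed.

Lemma disj_blk s t :
  (forall s' t', src s s' -> src t t' -> s' = t' \/ pr s' t' -> False) ->
  [disjoint blk s & blk t].
Proof.
move=> H; apply: disjP' => j /blk_src [s' [hs ->]] /blk_src [t' [ht e]].
by apply: (H s' t' hs ht); apply: f_eq => //; [exact: src_nabs hs| exact: src_nabs ht].
Qed.

Lemma blk_nabs s : ~~ abs s -> blk s = [set fc s].
Proof. by move=> ns; rewrite /blk; case: pickP => // u au; move: ns => /existsP []; exists u. Qed.

Lemma blk_abs s u : absb s u -> blk s = [set fc (u, false); fc (u, true)].
Proof.
move=> au; rewrite /blk; case: pickP => [u' au'|/(_ u)]; last by rewrite au.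
by rewrite (absb_uniq au' au).
Qed.

Lemma absbE v b u : absb (v, b) u = [&& adj v u, idx v u == b & idx u v == 2].
Proof. by []. Qed.

Lemma prE v b u c : pr (v, b) (u, c) = [&& adj v u, idx v u == b & idx u v == c].
Proof. by []. Qed.

Lemma bneq (b : bool) : (nat_of_bool b == nat_of_bool (~~ b)) = false.
Proof. by case: b. Qed.

Lemma blk_disj v : [disjoint blk (v, false) & blk (v, true)].
Proof.
apply: disj_blk => s' t' [[_ ->]|[x [ax sx]]] [[_ ->]|[y [ay ty]]].
- by case=> [[]|]; rewrite ?prE ?Hirr.
- move: ay; rewrite absbE => /and3P [hy /eqP iy _].
  case: t' ty => y' c /= -> [[e _]|]; first by move: hy; rewrite -e Hirr.
  by rewrite prE iy => /and3P [].
- move: ax; rewrite absbE => /and3P [hx /eqP ix _].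
  case: s' sx => x' c /= -> [[e _]|]; first by move: hx; rewrite e Hirr.
  by rewrite prE ix => /and3P [].
- move=> _; have dx := absb_deg Hsym Hdeg ax; have dy := absb_deg Hsym Hdeg ay.
  move: ax ay; rewrite !absbE => /and3P [hx /eqP ix _] /and3P [hy /eqP iy _].
  have xy : x != y by apply: contraTneq isT => exy; move: ix; rewrite exy iy.
  by apply: (deg3_ncommon Hfar xy dx dy (v := v)); rewrite // Hsym.
Qed.

Lemma blk_disj_edge v u bv bu : pr (v, bv) (u, bu) ->
  [disjoint blk (v, ~~ bv) & blk (u, ~~ bu)].
Proof.
rewrite prE => /and3P [hvu /eqP ivu /eqP iuv].
have huv : adj u v by rewrite Hsym.
apply: disj_blk => s' t' [[_ ->]|[x [ax sx]]] [[_ ->]|[y [ay ty]]].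
- case=> [[e _]|]; first by move: hvu; rewrite e Hirr.
  by rewrite prE ivu bneq andbF.
- move: ay; rewrite absbE => /and3P [hy /eqP iy _].
  case: t' ty => y' c /= -> [[e _]|].
    by move: iy; rewrite -e iuv => /eqP; rewrite bneq.
  rewrite prE => /and3P [hvy _ _].
  by move: (Htri v u y); rewrite hvu hy Hsym hvy.
- move: ax; rewrite absbE => /and3P [hx /eqP ix _].
  case: s' sx => x' c /= -> [[e _]|].
    by move: ix; rewrite e ivu => /eqP; rewrite bneq.
  rewrite prE => /and3P [hxu _ _].
  by move: (Htri u v x); rewrite huv hx hxu.
- have dx := absb_deg Hsym Hdeg ax; have dy := absb_deg Hsym Hdeg ay.
  move: ax ay; rewrite !absbE => /and3P [hx _ _] /and3P [hy _ _].
  case: s' sx t' ty => x' c /= -> [y' d] /= -> [[e _]|].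
    by subst y; move: (Htri v u x); rewrite hvu hy Hsym hx.
  rewrite prE => /and3P [hxy _ _].
  by move: (deg3_nadj Hirr Hfar dx dy); rewrite hxy.
Qed.

Lemma f_neq s t : ~~ abs s -> ~~ abs t -> s != t -> ~~ pr s t -> fc s != fc t.
Proof.
move=> ns nt st pst; apply/negP => /eqP /(f_eq ns nt) [e|p]; first by move: st; rewrite e eqxx.
by move: pst; rewrite p.
Qed.

Lemma blk_disj_far u w b c : u != w -> ~~ adj u w ->
  (forall x, adj x u -> adj x w -> (idx x w != 2) && (idx x u != 2)) ->
  [disjoint blk (u, b) & blk (w, c)].
Proof.
move=> uw nuw H.
apply: disj_blk => s' t' [[_ ->]|[x [ax sx]]] [[_ ->]|[y [ay ty]]].
- case=> [[e _]|]; first by move: uw; rewrite e eqxx.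
  by rewrite prE (negbTE nuw).
- move: ay; rewrite absbE => /and3P [hy _ /eqP iy].
  case: t' ty => y' d /= -> [[e _]|].
    by move: nuw; rewrite e Hsym hy.
  rewrite prE => /and3P [huy _ _].
  by move: (H y); rewrite Hsym huy Hsym hy iy eqxx => /(_ isT isT).
- move: ax; rewrite absbE => /and3P [hx _ /eqP ix].
  case: s' sx => x' d /= -> [[e _]|].
    by move: nuw; rewrite -e hx.
  rewrite prE => /and3P [hxw _ _].
  by move: (H x); rewrite Hsym hx hxw ix eqxx andbF => /(_ isT isT).
- have dx := absb_deg Hsym Hdeg ax; have dy := absb_deg Hsym Hdeg ay.
  move: ax ay; rewrite !absbE => /and3P [hx _ /eqP ix] /and3P [hy _ /eqP iy].
  case: s' sx t' ty => x' d /= -> [y' e] /= -> [[exy _]|].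
    subst y; move: uw; rewrite (@idx_inj _ adj x u w) ?eqxx // ?ix ?iy // Hsym //.
  rewrite prE => /and3P [hxy _ _].
  by move: (deg3_nadj Hirr Hfar dx dy); rewrite hxy.
Qed.

Lemma config u w x : u != w -> ~~ adj u w -> adj x u -> adj x w -> idx x w = 2 ->
  exists bu bw (p q s r : 'I_n.+1),
  [/\ blk (u, bu) = [set p], blk (u, ~~ bu) = [set q], blk (w, bw) = [set p; s],
      blk (w, ~~ bw) = [set r] &
      [&& p != q, p != s, p != r, s != r, s != q & r != q]].
Proof.
move=> uw nuw hxu hxw ixw.
have dx := idx2_deg Hdeg hxw ixw.
have hux : adj u x by rewrite Hsym.
have hwx : adj w x by rewrite Hsym.
have ixu : (idx x u < 2)%N.
  have := idx_lt hxu; rewrite dx => l.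
  have : idx x u != 2 by apply: contraNneq uw => e; apply/eqP/(idx_inj hxu hxw); rewrite e ixw.
  by move: l; lia.
have iux := idx_nbr3 Hsym Hirr Hdeg Hfar hxu dx.
have iwx := idx_nbr3 Hsym Hirr Hdeg Hfar hxw dx.
set cu := (idx x u == 1%N); set bu := (idx u x == 1%N); set bw := (idx w x == 1%N).
have ecu : nat_of_bool cu = idx x u by rewrite b2n.
have ebu : nat_of_bool bu = idx u x by rewrite b2n.
have ebw : nat_of_bool bw = idx w x by rewrite b2n.
have nx : forall b, ~~ abs (x, b) by move=> b; apply: (deg3_nabs Hsym Hirr Hdeg Hfar).
have p1 : pr (u, bu) (x, cu) by rewrite prE hux ebu ecu !eqxx.
have nabs_other : forall v (b : bool), adj v x -> idx v x = b -> ~~ abs (v, ~~ b).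
  move=> v b hvx ivx; rewrite -/(abs (v, ~~ b)); apply/existsP => -[y]; rewrite absbE => /and3P [hvy /eqP ivy /eqP iyv].
  have dy : deg adj y = 3 by apply: (idx2_deg Hdeg _ iyv); rewrite Hsym.
  have xy : x != y.
    by apply: contraTneq isT => exy; move: ivx; rewrite exy ivy => /eqP; rewrite eq_sym bneq.
  by apply: (deg3_ncommon Hfar xy dx dy (v := v)); rewrite // Hsym.
have nu' := nabs_other u bu hux (esym ebu).
have nw' := nabs_other w bw hwx (esym ebw).
have aw : absb (w, bw) x by rewrite absbE hwx ebw ixw !eqxx.
exists bu, bw, (fc (x, cu)), (fc (u, ~~ bu)), (fc (x, ~~ cu)), (fc (w, ~~ bw)); split.
- by rewrite blk_nabs ?(pr_nabs p1) // (f_pr p1).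
- by rewrite blk_nabs.
- rewrite (blk_abs aw); by case: (cu); rewrite // set2C.
- by rewrite blk_nabs.
have neq := f_neq.
apply/and5P; split; [| | | |apply/andP; split].
- apply: neq => //; first by apply: contraTneq hxu => -[<-]; rewrite Hirr.
  by rewrite prE -ebu bneq !andbF.
- apply: neq => //; first by apply/negP => /eqP []; case: (cu).
  by rewrite prE Hirr.
- apply: neq => //; first by apply: contraTneq hxw => -[<-]; rewrite Hirr.
  by rewrite prE hxw ixw; case: (cu).
- apply: neq => //; first by apply: contraTneq hxw => -[<-]; rewrite Hirr.
  by rewrite prE hxw ixw; case: (cu).
- apply: neq => //; first by apply: contraTneq hxu => -[<-]; rewrite Hirr.
  by rewrite prE -ecu bneq /= andbF.
- apply: neq => //; first by apply: contra_neq uw => -[->].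
  by rewrite prE Hsym (negbTE nuw).
Qed.

End Blocks.

End P_M3b.
Import P_M3b.

Module P_M4.
Import GRing.Theory.
Local Open Scope ring_scope.

Section Assembly.
Variable k : fieldType.
Variables (V : finType) (adj : rel V).
Hypotheses (Hsym : ssrbool.symmetric adj) (Hirr : irreflexive adj)
  (Hdeg : forall v, (deg adj v <= 3)%N) (Hfar : deg3_far_apart adj)
  (Htri : triangle_free adj).
Variable n : nat.
Hypothesis HR : (#|Rset adj| <= n.+1)%N.

Local Notation pr := (pr adj).
Local Notation absb := (absb adj).
Local Notation abs := (abs adj).
Local Notation idx := (idx adj).
Local Notation blk := (blk adj n).
Local Notation f := (fc adj n).
Local Notation blk_disj_ := (blk_disj Hsym Hirr Hdeg Hfar HR).

Definition Lline (v : V) : 'M[k]_n.+1 := line (blk (v, false)) (blk (v, true)).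

Lemma blk_disj' v b : [disjoint blk (v, b) & blk (v, ~~ b)].
Proof. by case: b; [rewrite disjoint_sym|]; apply: blk_disj_. Qed.

Lemma L_inl v b (x : 'rV[k]_n.+1) : (x <= Lline v)%MS -> inlm (blk (v, b)) (blk (v, ~~ b)) x.
Proof. by move/sub_lineP => h; case: b => //; apply: inlC. Qed.

Lemma inl_L v b (x : 'rV[k]_n.+1) : inlm (blk (v, b)) (blk (v, ~~ b)) x -> (x <= Lline v)%MS.
Proof. by case: b => h; apply/sub_lineP => //; apply: inlC. Qed.

Lemma slot_L v b : (@ind k _ (blk (v, b)) <= Lline v)%MS.
Proof. by apply: (inl_L (b := b)); exists 1, 0; rewrite scale1r scale0r addr0. Qed.

Lemma ind_union (A B : {set 'I_n.+1}) : [disjoint A & B] ->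
  ind (A :|: B) = ind A + ind B :> 'rV[k]_n.+1.
Proof.
move=> d; apply/rowP => j; rewrite !mxE inE.
case: (boolP (j \in A)) => jA /=; last by rewrite add0r.
by rewrite (disjointFr d jA) addr0.
Qed.

Lemma rankL v : \rank (Lline v) = 2%N.
Proof. by apply: rank_line; rewrite ?blk_n0 ?blk_disj_. Qed.

Definition nd v u := if idx v u == 2 then blk (v, false) :|: blk (v, true) else blk (v, idx v u == 1%N).

Lemma nd_n0 v u : nd v u != set0.
Proof.
rewrite /nd; case: ifP => _; last exact: blk_n0.
by case/set0Pn: (blk_n0 adj n (v, false)) => j hj; apply/set0Pn; exists j; rewrite inE hj.
Qed.

Lemma capE_abs v u : adj v u -> idx v u = 2 ->
  (Lline v :&: Lline u == ind (nd v u))%MS /\ nd v u = nd u v.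
Proof.
move=> hvu ivu.
have dv := idx2_deg Hdeg hvu ivu.
have huv : adj u v by rewrite Hsym.
have iuv := idx_nbr3 Hsym Hirr Hdeg Hfar hvu dv.
set bu := (idx u v == 1%N).
have ebu : nat_of_bool bu = idx u v by rewrite b2n.
have au : absb (u, bu) v by rewrite absbE huv ebu ivu !eqxx.
have Bu : blk (u, bu) = [set f (v, false); f (v, true)] by apply: blk_abs.
have nv : forall b, ~~ abs (v, b) by move=> b; apply: (deg3_nabs Hsym Hirr Hdeg Hfar).
have Bv : forall b, blk (v, b) = [set f (v, b)] by move=> b; rewrite blk_nabs.
have ndv : nd v u = [set f (v, false); f (v, true)] by rewrite /nd ivu eqxx !Bv.
have ndu : nd u v = [set f (v, false); f (v, true)].
  by rewrite /nd; have -> : (idx u v == 2) = false by apply/negbTE; move: iuv; lia.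
split; last by rewrite ndv ndu.
rewrite ndv; apply: cap_eq1.
- rewrite -!Bv ind_union ?blk_disj_ //; apply/sub_lineP; exists 1, 1; by rewrite !scale1r.
- by rewrite -Bu slot_L.
- move=> x /(L_inl false) hx /(L_inl bu) hy; rewrite /= !Bv Bu in hx hy.
  have d1 := blk_disj_ v; rewrite !Bv disjoints1 inE in d1.
  have d2 := blk_disj' u bu; rewrite Bu in d2.
  have p1 : f (v, false) \notin blk (u, ~~ bu) by rewrite (disjointFr d2) // !inE eqxx.
  have p2 : f (v, true) \notin blk (u, ~~ bu) by rewrite (disjointFr d2) // !inE eqxx orbT.
  have [e ->] := capE2 d1 (blk_n0 _ _ _) p1 p2 hx hy.
  by apply: scalemx_sub.
Qed.

Lemma capE v u : adj v u -> (Lline v :&: Lline u == ind (nd v u))%MS /\ nd v u = nd u v.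
Proof.
move=> hvu; have huv : adj u v by rewrite Hsym.
case: (eqVneq (idx v u) 2) => [e|n1]; first exact: capE_abs.
case: (eqVneq (idx u v) 2) => [e|n2].
  have [h1 h2] := capE_abs huv e; rewrite capmxC -h2; split => //.
have l1 : (idx v u < 2)%N by have := idx_lt hvu; have := Hdeg v; move: n1; lia.
have l2 : (idx u v < 2)%N by have := idx_lt huv; have := Hdeg u; move: n2; lia.
set bv := (idx v u == 1%N); set bu := (idx u v == 1%N).
have p : pr (v, bv) (u, bu) by rewrite prE hvu !b2n // !eqxx.
have Bv : blk (v, bv) = [set f (v, bv)] by rewrite blk_nabs // (pr_nabs p).
have Bu : blk (u, bu) = [set f (v, bv)].
  by rewrite blk_nabs ?(f_pr Hsym n p) // (pr_nabs (t := (v, bv))) // pr_sym.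
have ndv : nd v u = blk (v, bv) by rewrite /nd (negbTE n1).
have ndu : nd u v = blk (u, bu) by rewrite /nd (negbTE n2).
split; last by rewrite ndv ndu Bv Bu.
rewrite ndv; apply: cap_eq1; first exact: slot_L.
  by rewrite Bv -Bu slot_L.
move=> x /(L_inl bv) hx /(L_inl bu) hy; rewrite Bu -Bv in hy.
have d2 : [disjoint blk (v, bv) & blk (u, ~~ bu)] by rewrite Bv -Bu blk_disj'.
have [e ->] := capE1 (blk_n0 _ _ _) (blk_n0 _ _ _) (blk_n0 _ _ _) (blk_disj' v bv) d2
  (blk_disj_edge Hsym Hirr Hdeg Hfar Htri HR p) hx hy.
by apply: scalemx_sub.
Qed.

Lemma capN v u : v != u -> ~~ adj v u -> \rank (Lline v :&: Lline u)%MS = 0%N.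
Proof.
move=> vu nvu; apply: cap_rank0.
case: (boolP [exists x, [&& adj x v, adj x u & idx x u == 2]]).
  case/existsP => x /and3P [hxv hxu /eqP ix].
  have [bu [bw [p [q [s [r [B1 B2 B3 B4 /and5P [pq ps pr' sr /andP [sq rq]]]]]]]]] :=
    config Hsym Hirr Hdeg Hfar HR vu nvu hxv hxu ix.
  move=> x' /(L_inl bu) hx /(L_inl bw) hy; rewrite B1 B2 in hx; rewrite B3 B4 in hy.
  exact: capD pq ps pr' sr sq rq hx hy.
move=> nc1.
case: (boolP [exists x, [&& adj x u, adj x v & idx x v == 2]]).
  case/existsP => x /and3P [hxu hxv /eqP ix].
  have uv : u != v by rewrite eq_sym.
  have nuv : ~~ adj u v by rewrite Hsym.
  have [bu [bw [p [q [s [r [B1 B2 B3 B4 /and5P [pq ps pr' sr /andP [sq rq]]]]]]]]] :=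
    config Hsym Hirr Hdeg Hfar HR uv nuv hxu hxv ix.
  move=> x' /(L_inl bw) hy /(L_inl bu) hx; rewrite B1 B2 in hx; rewrite B3 B4 in hy.
  exact: capD pq ps pr' sr sq rq hx hy.
move=> nc2.
have H : forall x, adj x v -> adj x u -> (idx x u != 2) && (idx x v != 2).
  move=> x hxv hxu; apply/andP; split.
    by apply: contraNneq nc1 => e; apply/existsP; exists x; rewrite hxv hxu e.
  by apply: contraNneq nc2 => e; apply/existsP; exists x; rewrite hxv hxu e.
move=> x /(L_inl false) hx /(L_inl false) hy.
apply: capN hx hy; apply: disjP' => j; rewrite !inE => /orP [] jv /orP [] ju.
all: have d := fun b c => blk_disj_far Hsym Hirr Hdeg Hfar HR b c vu nvu H.
all: by rewrite (disjointFr (d _ _) jv) in ju.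
Qed.

Lemma blocks_neq (A B : {set 'I_n.+1}) : A != set0 -> B != set0 -> [disjoint A & B] ->
  [&& A != B, A != A :|: B & B != A :|: B].
Proof.
move=> /set0Pn [a aA] /set0Pn [b bB] d.
apply/and3P; split; apply/negP => /eqP /setP.
- by move/(_ a); rewrite aA (disjointFr d aA).
- by move/(_ b); rewrite inE bB orbT (disjointFl d bB).
- by move/(_ a); rewrite inE aA (disjointFr d aA).
Qed.

Lemma nd_neq v u w : adj v u -> adj v w -> u != w -> nd v u != nd v w.
Proof.
move=> hu hw uw.
have iuw : idx v u != idx v w by apply: contra_neq uw; apply: idx_inj.
have lu := idx_lt hu; have lw := idx_lt hw; have dv := Hdeg v.
have /and3P [n01 n0U n1U] := blocks_neq (blk_n0 adj n (v, false)) (blk_n0 adj n (v, true)) (blk_disj_ v).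
rewrite /nd; move: iuw lu lw; case: (idx v u) => [|[|[|i]]]; case: (idx v w) => [|[|[|j]]] //= _.
all: try (move=> h1 h2; lia).
all: move=> _ _; try by rewrite ?n01 ?n0U ?n1U.
all: by rewrite eq_sym ?n01 ?n0U ?n1U.
Qed.

End Assembly.

End P_M4.
Import P_M4.

Local Open Scope ring_scope.

Theorem theorem1p3 (k : closedFieldType) (hchar : [pchar k] =i pred0)
    (V : finType) (adj : rel V)
    (Hsimple : simple_graph adj)
    (Hconn : connected_graph adj)
    (Hsub : strictly_subtrivalent adj)
    (Hfar : deg3_far_apart adj)
    (Htri : triangle_free adj) :
  exists L : V -> 'M[k]_((target_dim adj).+1),
    graph_curve_embedding adj L /\
    forall v : V, exists S : seq {mpoly k[(target_dim adj).+1]},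
      (forall f, f \in S -> var_or_binomial f) /\
      (forall p, vanishing_ideal (L v) p <-> ideal_gen S p).
Proof.
case: Hsimple => Hsym Hirr; case: Hsub => Hdeg _.
have HR : (#|Rset adj| <= (target_dim adj).+1)%N.
  have := card_R Hsym Hirr Hdeg Hfar; rewrite /target_dim; lia.
exists (Lline k adj (target_dim adj)); split.
  split.
  - move=> v.
    exact: (@rankL k _ _ Hsym Hirr Hdeg Hfar _ HR v).
  - move=> u v _ huv; have [h _] := capE k Hsym Hirr Hdeg Hfar Htri HR huv.
    exact: cap_rank1 (nd_n0 _ _ u v) h.
  - move=> u v uv nuv; exact: (@capN k _ _ Hsym Hirr Hdeg Hfar _ HR u v uv nuv).
  - move=> v u w hvu hvw uw.
    have huv : adj u v by rewrite Hsym.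
    have hwv : adj w v by rewrite Hsym.
    have [h1 e1] := capE k Hsym Hirr Hdeg Hfar Htri HR huv.
    have [h2 e2] := capE k Hsym Hirr Hdeg Hfar Htri HR hwv.
    rewrite e1 in h1; rewrite e2 in h2.
    exact: cap_neq (nd_n0 _ _ v u) (nd_neq Hsym Hirr Hdeg Hfar HR hvu hvw uw) h1 h2.
move=> v.
case/set0Pn: (blk_n0 adj (target_dim adj) (v, false)) => r0 r0A.
case/set0Pn: (blk_n0 adj (target_dim adj) (v, true)) => r1 r1B.
have dAB := blk_disj Hsym Hirr Hdeg Hfar HR v.
exists (gens k (blk adj (target_dim adj) (v, false)) (blk adj (target_dim adj) (v, true)) r0 r1); split.
  by move=> f; apply: gens_vb.
by move=> p; apply: gens_ideal.
Qed.
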